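(* Let $n\ge 1$ and $m\ge 2$ be integers, and let $\chi_{n,m}\colon\mathbb{F}_2^n\to\mathbb{F}_2^n$ be given by $\chi_{n,m}(x)=y$ with $y_i=x_i+x_{i+m}(x_{i+m-1}+1)(x_{i+m-2}+1)\cdots(x_{i+1}+1)$ for $i\in\{0,\dots,n-1\}$, indices modulo $n$. Then $\chi_{n,m}$ is a permutation of $\mathbb{F}_2^n$ if and only if $m\nmid n$. In particular, if $m\nmid n$ and $\ell=\lfloor n/m\rfloor$, then $$\chi_{n,m}^{-1}=\theta_{m,0}+\theta_{m,1}+\theta_{m,2}+\cdots+\theta_{m,\ell},$$ equivalently, $\chi_{n,m}^{-1}(x)=y$ with $y_i=x_i+\sum_{k=1}^{\ell}x_{i+mk}\prod_{1\le j\le mk-1,\ m\nmid j}(x_{i+j}+1)$; moreover the algebraic degree of $\chi_{n,m}^{-1}$ is $(m-1)\ell+1$.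
   Context: For a nonnegative integer $k$, $\theta_{m,k}\colon\mathbb{F}_2^n\to\mathbb{F}_2^n$ is defined by $\theta_{m,k}(x)=y$ with $y_i=x_{i+mk}\prod_{1\le j\le mk-1,\ m\nmid j}(x_{i+j}+1)$ (indices modulo $n$); $\theta_{m,0}$ is the identity map. Sums of maps are pointwise sums. The algebraic degree of a map $\mathbb{F}_2^n\to\mathbb{F}_2^n$ is the maximum degree of the algebraic normal forms of its coordinate functions. *)

(* Defs.v *)
(* F_2 is modelled by bool: addition = xor (addb),
   multiplication = andb, and (x + 1) = ~~ x. *)
From mathcomp Require Import all_boot.
Set Implicit Arguments. Unset Strict Implicit. Unset Printing Implicit Defensive.

Definition vec (n : nat) := {ffun 'I_n -> bool}.

(* x_k with the index k taken modulo n (n >= 1 in all uses). *)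
Definition at_ (n : nat) (x : vec n) (k : nat) : bool :=
  odflt false (omap x (insub (k %% n) : option 'I_n)).

Definition chi (n m : nat) (x : vec n) : vec n :=
  [ffun i : 'I_n => addb (at_ x i)
     (at_ x (i + m) && \big[andb/true]_(1 <= j < m) ~~ at_ x (i + j))].

Definition theta (n m k : nat) (x : vec n) : vec n :=
  if k == 0 then x else
  [ffun i : 'I_n => at_ x (i + m * k) &&
     \big[andb/true]_(1 <= j < m * k | ~~ (m %| j)) ~~ at_ x (i + j)].

Definition theta_sum (n m l : nat) (x : vec n) : vec n :=
  [ffun i : 'I_n => \big[addb/false]_(k < l.+1) theta m k x i].

Definition indic (n : nat) (T : {set 'I_n}) : vec n := [ffun i => i \in T].

(* Coefficient of the monomial prod_{i in S} x_i in the algebraic normal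
   form of f (binary Moebius transform). *)
Definition anf_coef (n : nat) (f : vec n -> bool) (S : {set 'I_n}) : bool :=
  \big[addb/false]_(T : {set 'I_n} | T \subset S) f (indic T).

(* Degree of the ANF of a Boolean function (0 for the zero function). *)
Definition anf_deg (n : nat) (f : vec n -> bool) : nat :=
  \max_(S : {set 'I_n} | anf_coef f S) #|S|.

Definition alg_deg (n : nat) (F : vec n -> vec n) : nat :=
  \max_(i : 'I_n) anf_deg (fun x => F x i).

(* Main.v *)
Require Import Defs.
From mathcomp Require Import all_boot zify.
Set Implicit Arguments. Unset Strict Implicit. Unset Printing Implicit Defensive.

Lemma bigandP (a b : nat) (P : pred nat) (F : nat -> bool) :
  reflect (forall j, a <= j < b -> P j -> F j)
          (\big[andb/true]_(a <= j < b | P j) F j).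
Proof.
rewrite big_all_cond; apply: (iffP allP) => H j.
- move=> Hj Pj; have := H j; rewrite mem_index_iota => /(_ Hj) /=; by rewrite Pj.
- rewrite mem_index_iota => Hj /=; apply/implyP; exact: H.
Qed.

Lemma bigandP' (a b : nat) (F : nat -> bool) :
  reflect (forall j, a <= j < b -> F j)
          (\big[andb/true]_(a <= j < b) F j).
Proof.
apply: (iffP (bigandP _ _ _ _)) => H j Hj; first exact: H.
by move=> _; apply: H.
Qed.

Lemma big_andl_addb (N : nat) (b : bool) (F : 'I_N -> bool) :
  \big[addb/false]_(i < N) (b && F i) = b && \big[addb/false]_(i < N) F i.
Proof. by case: b => //=; rewrite big1. Qed.

Lemma andb_addr (a b c : bool) : a && (b (+) c) = (a && b) (+) (a && c).
Proof. by case: a; case: b; case: c. Qed.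

Section Seq.
Variable m : nat.
Hypothesis m1 : 0 < m.

Definition Zb (X : nat -> bool) p := \big[andb/true]_(1 <= j < m) ~~ X (p + j).
Definition chiS (X : nat -> bool) p := X p (+) (X (p + m) && Zb X p).
Definition Tk (Y : nat -> bool) k p :=
  Y (p + m * k) && \big[andb/true]_(1 <= j < m * k | ~~ (m %| j)) ~~ Y (p + j).
Definition Wb (Y : nat -> bool) L p :=
  \big[andb/true]_(1 <= j < m * L.+1 | ~~ (m %| j)) ~~ Y (p + j).
Definition Hs (Y : nat -> bool) L p := \big[addb/false]_(k < L.+1) Tk Y k p.

Variables (X Y : nat -> bool).
Hypothesis HY : forall q, Y q = chiS X q.

Lemma L1 p : X p = Y p (+) (Zb Y p && X (p + m)).
Proof.
rewrite HY /chiS; case Xm: (X (p + m)); last by rewrite /= !andbF !addbF.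
rewrite andbT andTb.
suff ->: Zb Y p = Zb X p by rewrite addbK.
apply: eq_big_nat => j /andP[j1 jm].
congr negb; rewrite HY /chiS.
suff ->: Zb X (p + j) = false by rewrite andbF addbF.
apply/negbTE/negP => /bigandP' H.
have /H: 1 <= m - j < m by lia.
by rewrite -addnA subnKC ?Xm //; exact: ltnW.
Qed.

Lemma split_big (Z : nat -> bool) k p :
  Zb Z p && \big[andb/true]_(1 <= j < m * k | ~~ (m %| j)) ~~ Z (p + m + j)
  = \big[andb/true]_(1 <= j < m * k.+1 | ~~ (m %| j)) ~~ Z (p + j).
Proof.
apply/idP/idP.
- move=> /andP[/bigandP' H1 /bigandP H2]; apply/bigandP => j Hj Pj.
  case: (ltnP j m) => jm; first by apply: H1; lia.
  have jnm : j != m by apply: contraNneq Pj => ->.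
  rewrite mulnS in Hj.
  have := H2 (j - m); rewrite -addnA subnKC //; apply; first lia.
  by move: Pj; apply: contra => Hd; rewrite -(subnK jm) dvdn_add.
- move=> /bigandP H; apply/andP; split.
  + apply/bigandP' => j Hj; apply: H; first lia.
    by apply/negP => /dvdn_leq; lia.
  + apply/bigandP => j Hj Pj; rewrite -addnA; apply: H; first lia.
    by rewrite dvdn_addr ?dvdnn.
Qed.

Lemma Tk0 Z p : Tk Z 0 p = Z p.
Proof. by rewrite /Tk muln0 addn0 big_geq ?andbT. Qed.

Lemma TkS Z k p : Tk Z k.+1 p = Zb Z p && Tk Z k (p + m).
Proof.
rewrite /Tk -split_big mulnS addnA; case: (Z _); by rewrite ?andbF ?andbT.
Qed.

Lemma HsS Z L p : Hs Z L.+1 p = Z p (+) (Zb Z p && Hs Z L (p + m)).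
Proof.
rewrite /Hs big_ord_recl Tk0 -big_andl_addb; congr addb.
by apply: eq_bigr => k _; rewrite TkS.
Qed.

Lemma WbS Z L p : Wb Z L.+1 p = Zb Z p && Wb Z L (p + m).
Proof. by rewrite /Wb split_big. Qed.

Lemma Wb0 Z p : Wb Z 0 p = Zb Z p.
Proof.
rewrite /Wb muln1; apply/bigandP/bigandP' => H j Hj; first apply: H => //.
  by apply/negP => /dvdn_leq; lia.
by move=> _; apply: H.
Qed.

Lemma L2 L p : X p = Hs Y L p (+) (Wb Y L p && X (p + m * L.+1)).
Proof.
elim: L p => [|L IH] p.
  by rewrite /Hs big_ord1 Tk0 Wb0 muln1; exact: L1.
rewrite {1}L1 {1}IH HsS WbS andb_addr addbA -andbA -addnA -mulnS.
by [].
Qed.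
End Seq.

Section Per.
Variables (n m : nat) (X Y : nat -> bool).
Hypotheses (n0 : 0 < n) (m2 : 1 < m) (mn : ~~ (m %| n)).
Hypothesis Yper : forall a b, a %% n = b %% n -> Y a = Y b.
Hypothesis Xper : forall a b, a %% n = b %% n -> X a = X b.
Hypothesis HY : forall q, Y q = chiS m X q.

Lemma Tk_big k p : n %/ m < k -> Tk m Y k p = false.
Proof.
move=> Hk; have nk : n < m * k by rewrite mulnC -ltn_divLR //; lia.
rewrite /Tk; case Yk: (Y (p + m * k)) => //=.
apply/negbTE/negP => /bigandP H.
have /H: 1 <= m * k - n < m * k by lia.
rewrite dvdn_subr ?(negbTE mn) ?dvdn_mulr //; last exact: ltnW.
have -> : Y (p + (m * k - n)) = Y (p + m * k).
  by apply: Yper; rewrite -[in RHS](subnK (ltnW nk)) addnA modnDr.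
by rewrite Yk => /(_ isT).
Qed.

Lemma E_zero L p : L.+1 = n -> Wb m Y L p && X (p + m * L.+1) = false.
Proof.
move=> hL; rewrite hL; apply/negbTE/negP => /andP[/bigandP HW Hx].
have mn2 : 2 * n <= m * n by rewrite leq_mul2r m2 orbT.
have Y0 q : Y q = false.
  have [c [cn pc]] : exists c, c < n /\ (p + c) %% n = q %% n.
    exists ((q + (n - p %% n)) %% n); split; first by rewrite ltn_mod.
    rewrite modnDmr.
    have -> : p + (q + (n - p %% n)) = q + (p %/ n).+1 * n.
      have e := divn_eq p n; have hb := ltn_pmod p n0.
      rewrite mulSn; move: e hb; move: (p %/ n) (p %% n) => a b e hb.
      rewrite {1}e; lia.
    by rewrite addnC modnMDl.
  case: (boolP ((0 < c) && ~~ (m %| c))) => [/andP[c0 cm] | hc].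
  - rewrite -(Yper pc); apply/negbTE; apply: HW => //; lia.
  - have cm : m %| c.
      move: hc; rewrite negb_and negbK -leqNgt leqn0 => /orP[/eqP->|//].
      exact: dvdn0.
    have e : (p + (c + n)) %% n = q %% n by rewrite addnA modnDr.
    rewrite -(Yper e); apply/negbTE; apply: HW; first lia.
    by rewrite dvdn_addr.
have HX q : X q -> X (q + m) && Zb m X q.
  by move=> Xq; have := Y0 q; rewrite HY /chiS Xq; case: (_ && _).
have Hk k : X (p + m * n + m * k).
  elim: k => [|k IH]; first by rewrite muln0 addn0.
  have /andP[+ _] := HX _ IH.
  by have ->: p + m * n + m * k.+1 = p + m * n + m * k + m by rewrite mulnS; lia.
have /andP[_ /bigandP' Z] := HX _ (Hk (n %/ m)).
have r1 : 1 <= n %% m < m.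
  by rewrite ltn_mod (ltnW m2) andbT lt0n; move: mn; rewrite /dvdn.
have := Z (n %% m) r1.
have -> : X (p + m * n + m * (n %/ m) + n %% m) = X (p + m * n).
  apply: Xper.
  have ->: p + m * n + m * (n %/ m) + n %% m = p + m * n + n.
    by rewrite -addnA [m * (n %/ m)]mulnC -divn_eq.
  by rewrite modnDr.
by rewrite Hx.
Qed.
End Per.

Lemma at_mod n (x : vec n) a b : a %% n = b %% n -> at_ x a = at_ x b.
Proof. by rewrite /at_ => ->. Qed.

Lemma at_E n (n0 : 0 < n) (x : vec n) k : at_ x k = x (Ordinal (ltn_pmod k n0)).
Proof.
rewrite /at_; case: insubP => [u _ hu|]; last by rewrite ltn_pmod.
by congr (x _); apply: val_inj.
Qed.

Lemma at_ord n (x : vec n) (i : 'I_n) : at_ x i = x i.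
Proof.
have n0 : 0 < n by apply: leq_ltn_trans (ltn_ord i).
by rewrite at_E; congr (x _); apply: val_inj => /=; rewrite modn_small.
Qed.

Lemma at_chi n m (n0 : 0 < n) (x : vec n) q : at_ (chi m x) q = chiS m (at_ x) q.
Proof.
rewrite at_E /chi ffunE /= /chiS /Zb.
rewrite (@at_mod _ x (q %% n) q) ?modn_mod //.
rewrite (@at_mod _ x (q %% n + m) (q + m)) ?modnDml //.
congr (_ (+) (_ && _)); apply: eq_big_nat => j _.
by rewrite (@at_mod _ x (q %% n + j) (q + j)) ?modnDml.
Qed.

Lemma theta_Tk n m k (x : vec n) (i : 'I_n) : theta m k x i = Tk m (at_ x) k i.
Proof.
rewrite /theta; case: eqP => [->|_]; first by rewrite Tk0 at_ord.
by rewrite ffunE.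
Qed.

Lemma cancel_chi n m (n0 : 0 < n) (m2 : 1 < m) (mn : ~~ (m %| n)) :
  cancel (@chi n m) (@theta_sum n m (n %/ m)).
Proof.
move=> x; apply/ffunP => i; rewrite ffunE.
set X := at_ x; set Y := at_ (chi m x).
have HY q : Y q = chiS m X q by rewrite /Y at_chi.
have Xper a b : a %% n = b %% n -> X a = X b by exact: at_mod.
have Yper a b : a %% n = b %% n -> Y a = Y b by exact: at_mod.
have hle : (n %/ m).+1 <= n by apply: ltn_Pdiv.
rewrite (big_ord_widen _ (fun k => theta m k (chi m x) i) hle).
have -> : \big[addb/false]_(k < n | k < (n %/ m).+1) theta m k (chi m x) i
        = \big[addb/false]_(k < n) Tk m Y k i.
  rewrite [RHS](bigID (fun k : 'I_n => k < (n %/ m).+1)) /=.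
  rewrite [X in _ = _ (+) X]big1 ?addbF.
    by apply: eq_bigr => k _; rewrite theta_Tk.
  by move=> k; rewrite -leqNgt => hk; apply: (Tk_big n0 m2 mn Yper).
rewrite -at_ord -/X (L2 (ltnW m2) HY n.-1).
rewrite (E_zero n0 m2 mn Yper Xper HY _ (prednK n0)) addbF /Hs.
by rewrite prednK.
Qed.

Lemma chi_bij n m (n0 : 0 < n) (m2 : 1 < m) (mn : ~~ (m %| n)) :
  bijective (@chi n m).
Proof. apply: injF_bij; exact: can_inj (cancel_chi n0 m2 mn). Qed.

Lemma chi_not_bij n m (n0 : 0 < n) (m2 : 1 < m) (mn : m %| n) :
  ~ bijective (@chi n m).
Proof.
move=> /bij_inj inj.
pose z : vec n := [ffun i : 'I_n => m %| i].
pose o : vec n := [ffun => false].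
have ao k : at_ o k = false by rewrite at_E ffunE.
have az k : at_ z k = (m %| k).
  rewrite at_E ffunE /= [in RHS](divn_eq k n) dvdn_addr //.
  exact: dvdn_mull.
have ho : chi m o = o.
  by apply/ffunP => i; rewrite !ffunE !ao.
have hz : chi m z = o.
  apply/ffunP => i; rewrite !ffunE !az.
  case: (boolP (m %| i)) => hi.
  - rewrite (dvdn_addr _ hi) dvdnn /=.
    suff -> : \big[andb/true]_(1 <= j < m) ~~ at_ z (i + j) = true by [].
    apply/bigandP' => j hj; rewrite az dvdn_addr //.
    by apply/negP => /dvdn_leq; lia.
  - rewrite /=; apply/negbTE/negP => /andP[_ /bigandP' H].
    have hr : 0 < i %% m by rewrite lt0n.
    have hr2 : i %% m < m by rewrite ltn_mod; lia.
    have /H : 1 <= m - i %% m < m by lia.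
    rewrite az; apply/negP; rewrite negbK.
    have -> : i + (m - i %% m) = (i %/ m).+1 * m.
      have e := divn_eq i m; move: e hr2; move: (i %/ m) (i %% m) => a b e hb.
      rewrite mulSn {1}e; lia.
    by rewrite dvdn_mull.
have : z = o by apply: inj; rewrite hz ho.
by move/ffunP/(_ (Ordinal n0)); rewrite !ffunE /= dvdn0.
Qed.

Section Anf.
Variable n : nat.

Lemma anf_dep (f : vec n -> bool) (D S : {set 'I_n}) :
  (forall x y : vec n, (forall j, j \in D -> x j = y j) -> f x = f y) ->
  ~~ (S \subset D) -> anf_coef f S = false.
Proof.
move=> Hf /subsetPn [i iS iD].
rewrite /anf_coef (bigID (fun T : {set 'I_n} => i \in T)) /=.
suff -> : \big[addb/false]_(T : {set 'I_n} | (T \subset S) && (i \in T)) f (indic T)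
        = \big[addb/false]_(T : {set 'I_n} | (T \subset S) && (i \notin T)) f (indic T).
  by rewrite addbb.
rewrite (reindex_onto (fun T : {set 'I_n} => i |: T) (fun T => T :\ i)) /=; last first.
  by move=> T /andP[_ iT]; rewrite setD1K.
apply: eq_big => T.
  rewrite setU11 andbT subUset sub1set iS /=.
  case: (boolP (i \in T)) => iT.
    rewrite andbF; apply/negbTE/negP => /andP[_ /eqP e].
    by move: iT; rewrite -e in_setD1 eqxx.
  by rewrite setU1K // eqxx andbT.
move=> _; apply: Hf => j jD; rewrite !ffunE in_setU1.
by have -> : (j == i) = false by apply/negbTE; apply: contraNneq iD => <-.
Qed.

Lemma anf_one (f : vec n -> bool) (S T0 : {set 'I_n}) :
  T0 \subset S -> (forall T : {set 'I_n}, T \subset S -> f (indic T) = (T == T0)) ->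
  anf_coef f S = true.
Proof.
move=> h0 hf; rewrite /anf_coef (bigD1 T0) //= hf // eqxx big1 //=.
by move=> T /andP[TS TT0]; rewrite hf // (negbTE TT0).
Qed.

Lemma anf_sum (N : nat) (f : vec n -> bool) (F : 'I_N -> vec n -> bool) S :
  (forall x : vec n, f x = \big[addb/false]_(k < N) F k x) ->
  anf_coef f S = \big[addb/false]_(k < N) anf_coef (F k) S.
Proof.
move=> H; rewrite /anf_coef.
under eq_bigr do rewrite H.
exact: exchange_big.
Qed.
End Anf.

Section Deg.
Variables (n m : nat).
Hypotheses (n0 : 0 < n) (m2 : 1 < m) (mn : ~~ (m %| n)).

Definition pos (k : nat) : 'I_n := Ordinal (ltn_pmod k n0).

Lemma at_pos (x : vec n) k : at_ x k = x (pos k).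
Proof. exact: at_E. Qed.

Definition Dk (k i : nat) : {set 'I_n} :=
  pos (i + m * k) |: [set pos (i + (p.1 * m + p.2.+1)) | p : 'I_k * 'I_(m.-1)].

Lemma Dk_card k i : #|Dk k i| <= (m - 1) * k + 1.
Proof.
rewrite cardsU1 addnC; apply: leq_add; last exact: leq_b1.
apply: leq_trans (leq_imset_card _ _) _.
by rewrite card_prod !card_ord mulnC subn1.
Qed.

Lemma theta_dep k (i : 'I_n) (x y : vec n) :
  (forall j, j \in Dk k i -> x j = y j) -> theta m k x i = theta m k y i.
Proof.
move=> H; rewrite !theta_Tk /Tk !at_pos H ?setU11 //.
congr andb; rewrite big_seq_cond [RHS]big_seq_cond; apply: eq_bigr => j /andP[hj pj].
rewrite mem_index_iota in hj.
rewrite !at_pos H //; apply/setU1P; right; apply/imsetP.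
have ht : j %/ m < k by rewrite ltn_divLR; [rewrite mulnC; lia | lia].
have hr : 0 < j %% m by rewrite lt0n.
have hu : (j %% m).-1 < m.-1.
  have := ltn_mod j m; rewrite (ltnW m2) => hm; lia.
exists (Ordinal ht, Ordinal hu) => //=.
by congr pos; rewrite prednK // -divn_eq.
Qed.

Lemma deg_le : alg_deg (@theta_sum n m (n %/ m)) <= (m - 1) * (n %/ m) + 1.
Proof.
apply/bigmax_leqP => i _; apply/bigmax_leqP => S hS.
rewrite leqNgt; apply/negP => hlt.
move: hS.
rewrite (anf_sum (F := fun (k : 'I_(n %/ m).+1) x => theta m k x i)); last first.
  by move=> x; rewrite ffunE.
rewrite big1 // => k _.
apply: (anf_dep (D := Dk k i)); first exact: theta_dep.
apply/negP => /subset_leq_card hc.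
have := leq_trans hc (Dk_card k i).
have : (m - 1) * k + 1 <= (m - 1) * (n %/ m) + 1.
  by rewrite leq_add2r leq_mul2l -ltnS ltn_ord orbT.
lia.
Qed.

Lemma ml_lt : m * (n %/ m) < n.
Proof.
have e := divn_eq n m.
have : 0 < n %% m by rewrite lt0n; move: mn; rewrite /dvdn.
rewrite mulnC; lia.
Qed.

Lemma img_bound (l : nat) (t : 'I_l) (u : 'I_(m.-1)) :
  0 < t * m + u.+1 < m * l.
Proof.
have h1 : t.+1 * m <= l * m by rewrite leq_mul2r ltn_ord orbT.
have h2 := ltn_ord u.
rewrite mulSn in h1; rewrite [m * l]mulnC; lia.
Qed.

Lemma img_mod (t : nat) (u : 'I_(m.-1)) : (t * m + u.+1) %% m = u.+1.
Proof. by rewrite modnMDl modn_small //; have := ltn_ord u; lia. Qed.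

Lemma deg_ge : (m - 1) * (n %/ m) + 1 <= alg_deg (@theta_sum n m (n %/ m)).
Proof.
set l := n %/ m.
have hl : m * l < n := ml_lt.
set i0 : 'I_n := Ordinal n0.
set S0 := Dk l i0.
set a := pos (i0 + m * l).
set f := fun p : 'I_l * 'I_(m.-1) => pos (i0 + (p.1 * m + p.2.+1)).
have fval p : val (f p) = p.1 * m + p.2.+1.
  rewrite /= add0n modn_small //; have := img_bound p.1 p.2; lia.
have finj : injective f.
  move=> [t u] [t' u'] /(congr1 val); rewrite !fval /= => e.
  have e2 : u = u' :> nat.
    by have := congr1 (modn^~ m) e; rewrite /= !img_mod => -[].
  have e1 : t = t' :> nat.
    rewrite e2 in e; move/eqP: e; rewrite eqn_add2r eqn_mul2r.
    by case/orP => [/eqP|/eqP //]; lia.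
  by congr pair; apply: val_inj.
have aval : val a = m * l by rewrite /= add0n modn_small.
have anot : a \notin [set f p | p : 'I_l * 'I_(m.-1)].
  apply/imsetP => -[p _ /(congr1 val)]; rewrite aval fval => e.
  have := congr1 (modn^~ m) e; rewrite /= img_mod mulnC modnMl.
  by [].
have cardS0 : #|S0| = (m - 1) * l + 1.
  rewrite /S0 /Dk -/a cardsU1 anot (card_imset _ finj).
  by rewrite card_prod !card_ord mulnC subn1 addnC.
have hcoef : anf_coef (fun x => theta_sum m l x i0) S0.
  rewrite (anf_sum (F := fun (k : 'I_l.+1) x => theta m k x i0)); last first.
    by move=> x; rewrite ffunE.
  rewrite big_ord_recr /= big1 /=.
  - apply: (anf_one (T0 := [set a])); first by rewrite sub1set setU11.
    move=> T TS; rewrite theta_Tk /Tk !at_pos !ffunE -/a.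
    apply/idP/eqP.
    + move=> /andP[aT /bigandP H]; apply/setP => b; rewrite in_set1.
      apply/idP/eqP => [bT|->//].
      move: (subsetP TS b bT); rewrite in_setU1 => /orP[/eqP //|/imsetP[p _ e]].
      have := img_bound p.1 p.2; case/andP => hp1 hp2.
      have /H : 0 < p.1 * m + p.2.+1 < m * l by rewrite hp1.
      rewrite /dvdn img_mod /= => /(_ isT).
      rewrite at_pos ffunE.
      suff -> : pos (i0 + (p.1 * m + p.2.+1)) = b by rewrite bT.
      by rewrite e.
    + move=> ->; rewrite set11 /=; apply/bigandP => j hj pj.
      rewrite at_pos ffunE in_set1; apply/eqP => /(congr1 val).
      rewrite aval /= add0n modn_small; lia.
  - move=> k _; apply: (anf_dep (D := Dk k i0)); first exact: theta_dep.
    apply/negP => /subset_leq_card hc.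
    have := leq_trans hc (Dk_card k i0); rewrite cardS0.
    have : (m - 1) * k.+1 <= (m - 1) * l by rewrite leq_mul2l ltn_ord orbT.
    rewrite mulnS; lia.
apply: leq_trans (leq_bigmax i0).
rewrite -cardS0 /anf_deg; apply: leq_bigmax_cond; exact: hcoef.
Qed.
End Deg.

Theorem corollary2 (n m : nat) (hn : 1 <= n) (hm : 2 <= m) :
  (bijective (@chi n m) <-> ~~ (m %| n)) /\
  (~~ (m %| n) ->
     cancel (@chi n m) (@theta_sum n m (n %/ m)) /\
     cancel (@theta_sum n m (n %/ m)) (@chi n m) /\
     alg_deg (@theta_sum n m (n %/ m)) = (m - 1) * (n %/ m) + 1).
Proof.
split.
  split => [hb|mn]; last exact: chi_bij.
  by apply/negP => mn; exact: (chi_not_bij hn hm mn hb).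
move=> mn.
have c1 := cancel_chi hn hm mn.
split; first exact: c1.
split; first exact: (proj2 (bij_can_sym (chi_bij hn hm mn) _) c1).
by apply/eqP; rewrite eqn_leq deg_le // deg_ge.
Qed.
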